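(* Let $\beta>0$, $\lambda_p,\lambda_k\in\mathbb R$, and let $s_1,\dots,s_n\in\{\pm1\}$ be a nonconstant sign pattern, $S_\pm=\{i:s_i=\pm1\}$, $n_\pm=|S_\pm|$. Let $K^*_{ij}=a_+$ for $i,j\in S_+$, $b_+$ for $i\in S_+,j\in S_-$, $b_-$ for $i\in S_-,j\in S_+$, $a_-$ for $i,j\in S_-$, where \[ a_+=\frac{e^{\beta\lambda_p}}{n_+e^{\beta\lambda_p}+n_-e^{-\beta\lambda_p}},\ b_+=\frac{e^{-\beta\lambda_p}}{n_+e^{\beta\lambda_p}+n_-e^{-\beta\lambda_p}},\ a_-=\frac{e^{\beta\lambda_p}}{n_-e^{\beta\lambda_p}+n_+e^{-\beta\lambda_p}},\ b_-=\frac{e^{-\beta\lambda_p}}{n_-e^{\beta\lambda_p}+n_+e^{-\beta\lambda_p}}, \] and let $\gamma_i=\lambda_ps_i\sum_jK^*_{ij}s_j$ (so $\gamma_i=\gamma_+:=\lambda_p(n_+a_+-n_-b_+)$ on $S_+$ and $\gamma_i=\gamma_-:=\lambda_p(n_-a_--n_+b_-)$ on $S_-$). Define $L_k:\mathbb R^n\to\mathbb R^n$ by $(L_kz)_i=-\gamma_iz_i+\lambda_k\sum_{j=1}^nK^*_{ij}z_j$. Then $\mathbb R^n=V_+\oplus V_-\oplus V_{\mathrm{mean}}$, where \[ V_\pm=\Big\{z: z_i=0\ \text{for } i\in S_\mp,\ \sum_{i\in S_\pm}z_i=0\Big\},\qquad V_{\mathrm{mean}}=\{z: z\text{ is constant on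 }S_+\text{ and constant on }S_-\}, \] and each of $V_+,V_-,V_{\mathrm{mean}}$ is invariant under $L_k$.
   Context: $L_k$ is the modewise (transverse direction $e_k$, $k\ne p$) linearization of the symmetric self-attention dynamics at the sign-split pure-mode equilibrium $x_i^*=s_ie_p$, where $\lambda_p,\lambda_k$ are eigenvalues of the symmetric interaction matrix. *)

(* Defs.v *)
From HB Require Import structures.
From mathcomp Require Import all_boot all_order all_algebra.
From mathcomp Require Import all_classical all_reals all_analysis.
Set Implicit Arguments. Unset Strict Implicit. Unset Printing Implicit Defensive.
Import Order.TTheory GRing.Theory Num.Theory.
Local Open Scope ring_scope.

Section Defs.
Variables (R : realType) (n : nat) (beta lp : R) (s : 'I_n -> R).

Definition Splus : {set 'I_n} := [set i | s i == 1].
Definition Sminus : {set 'I_n} := [set i | s i == -1].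
Definition nplus : R := (#|Splus|)%:R.
Definition nminus : R := (#|Sminus|)%:R.

Definition aplus : R :=
  expR (beta * lp) / (nplus * expR (beta * lp) + nminus * expR (- (beta * lp))).
Definition bplus : R :=
  expR (- (beta * lp)) / (nplus * expR (beta * lp) + nminus * expR (- (beta * lp))).
Definition aminus : R :=
  expR (beta * lp) / (nminus * expR (beta * lp) + nplus * expR (- (beta * lp))).
Definition bminus : R :=
  expR (- (beta * lp)) / (nminus * expR (beta * lp) + nplus * expR (- (beta * lp))).

Definition Kstar (i j : 'I_n) : R :=
  if i \in Splus then (if j \in Splus then aplus else bplus)
  else (if j \in Splus then bminus else aminus).

Definition gammaA (i : 'I_n) : R := lp * s i * \sum_j Kstar i j * s j.

Definition Lk (lk : R) (z : 'rV[R]_n) : 'rV[R]_n :=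
  \row_i (- gammaA i * z 0 i + lk * \sum_j Kstar i j * z 0 j).

Definition Vplus (z : 'rV[R]_n) : Prop :=
  (forall i, i \in Sminus -> z 0 i = 0) /\ \sum_(i in Splus) z 0 i = 0.
Definition Vminus (z : 'rV[R]_n) : Prop :=
  (forall i, i \in Splus -> z 0 i = 0) /\ \sum_(i in Sminus) z 0 i = 0.
Definition Vmean (z : 'rV[R]_n) : Prop :=
  (forall i j, i \in Splus -> j \in Splus -> z 0 i = z 0 j) /\
  (forall i j, i \in Sminus -> j \in Sminus -> z 0 i = z 0 j).
End Defs.

Definition direct_sum3 (R : realType) (n : nat) (A B C : 'rV[R]_n -> Prop) : Prop :=
  (forall z, exists u v w, [/\ A u, B v, C w & z = u + v + w]) /\
  (forall u v w u' v' w', A u -> B v -> C w -> A u' -> B v' -> C w' ->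
     u + v + w = u' + v' + w' -> [/\ u = u', v = v' & w = w']).

(* Main.v *)
Require Import Defs.
From HB Require Import structures.
From mathcomp Require Import all_boot all_order all_algebra.
From mathcomp Require Import all_classical all_reals all_analysis.
From mathcomp Require Import ring lra.
Import Order.TTheory GRing.Theory Num.Theory.
Local Open Scope ring_scope.

Lemma inC (T : finType) (A : {set T}) x : (x \in ~: A) = (x \notin A).
Proof. by rewrite !inE. Qed.

Section Aux.
Variables (R : realType) (n : nat) (s : 'I_n -> R).
Hypothesis hs : forall i, s i = 1 \/ s i = -1.

Lemma SminusE : Sminus s = ~: Splus s.
Proof.
apply/setP => i; rewrite !inE.
have h1 : (1 == -1 :> R) = false by apply/eqP; lra.
by case: (hs i) => ->; rewrite ?h1 ?eqxx // eq_sym h1.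
Qed.

Lemma sE i : s i = if i \in Splus s then 1 else -1.
Proof. by rewrite inE; case: (hs i) => ->; rewrite ?eqxx //; case: eqP => // ->. Qed.

Lemma Kclass beta lp i i' j : (i \in Splus s) = (i' \in Splus s) ->
  Kstar beta lp s i j = Kstar beta lp s i' j.
Proof. by rewrite /Kstar => ->. Qed.

Lemma gclass beta lp i i' : (i \in Splus s) = (i' \in Splus s) ->
  gammaA beta lp s i = gammaA beta lp s i'.
Proof.
move=> H; rewrite /gammaA (sE i) (sE i') H; congr (_ * _).
by apply: eq_bigr => j _; rewrite (Kclass _ _ _ _ j H).
Qed.

Lemma const_zero (A : {set 'I_n}) (f g : 'I_n -> R) i0 : i0 \in A ->
  \sum_(i in A) f i = 0 -> (forall i, i \in A -> g i = g i0) ->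
  (forall i, i \in A -> f i + g i = 0) -> forall i, i \in A -> g i = 0.
Proof.
move=> Hi0 Hf Hg Hfg.
have : \sum_(i in A) g i = 0.
  rewrite (eq_bigr (fun i => - f i)); last by move=> i /Hfg => H; lra.
  by rewrite sumrN Hf oppr0.
rewrite (eq_bigr (fun _ => g i0)) // sumr_const => /eqP.
have cA : (#|A| == 0)%N = false.
  by apply/negbTE; rewrite -lt0n card_gt0; apply/set0Pn; exists i0.
by rewrite mulrn_eq0 cA /= => /eqP H i /Hg ->.
Qed.

End Aux.

Theorem lemmaA2 (R : realType) (n : nat) (beta lp lk : R) (s : 'I_n -> R)
  (hbeta : 0 < beta)
  (hs : forall i, s i = 1 \/ s i = -1)
  (hnc : exists i j, s i = 1 /\ s j = -1) :
  direct_sum3 (Vplus s) (Vminus s) (Vmean s) /\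
  (forall z, Vplus s z -> Vplus s (Lk beta lp s lk z)) /\
  (forall z, Vminus s z -> Vminus s (Lk beta lp s lk z)) /\
  (forall z, Vmean s z -> Vmean s (Lk beta lp s lk z)).
Proof.
have SmE := @SminusE R n s hs.
have [i0 [j0 [hi0 hj0]]] := hnc.
have iP : i0 \in Splus s by rewrite inE hi0.
have jP : j0 \in ~: Splus s by rewrite -SmE inE hj0.
have jP' : j0 \notin Splus s by rewrite inE in jP.
rewrite /Vplus /Vminus /Vmean /direct_sum3 SmE.
set P := Splus s in iP jP jP' *.
have LkE : forall (z : 'rV[R]_n) i j, (i \in P) = (j \in P) -> z 0 i = z 0 j ->
    (Lk beta lp s lk z) 0 i = (Lk beta lp s lk z) 0 j.
  move=> z i j H Hz; rewrite !mxE (@gclass _ _ s hs beta lp i j H) Hz.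
  congr (_ + _ * _); apply: eq_bigr => k _.
  by rewrite (@Kclass _ _ s beta lp i j k H).
split; [split|split; [|split]].
- move=> z.
  pose np := (#|P|)%:R : R. pose nm := (#|~:P|)%:R : R.
  pose mp := (\sum_(i in P) z 0 i) / np. pose mm := (\sum_(i in ~:P) z 0 i) / nm.
  have np0 : np != 0 by rewrite pnatr_eq0 -lt0n card_gt0; apply/set0Pn; exists i0.
  have nm0 : nm != 0 by rewrite pnatr_eq0 -lt0n card_gt0; apply/set0Pn; exists j0.
  exists (\row_i (if i \in P then z 0 i - mp else 0)),
         (\row_i (if i \in P then 0 else z 0 i - mm)),
         (\row_i (if i \in P then mp else mm)).
  split.
  + split; first by move=> i; rewrite inC mxE => /negbTE ->.
    rewrite (eq_bigr (fun i => z 0 i - mp)); last by move=> i Hi; rewrite mxE Hi.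
    by rewrite sumrB sumr_const -mulr_natr /mp divfK // subrr.
  + split; first by move=> i Hi; rewrite mxE Hi.
    rewrite (eq_bigr (fun i => z 0 i - mm)); last first.
      by move=> i Hi; rewrite inC in Hi; rewrite mxE (negbTE Hi).
    by rewrite sumrB sumr_const -mulr_natr /mm divfK // subrr.
  + split; first by move=> i j Hi Hj; rewrite !mxE Hi Hj.
    by move=> i j Hi Hj; move: Hi Hj; rewrite !inC => Hi Hj; rewrite !mxE (negbTE Hi) (negbTE Hj).
  + apply/rowP => i; rewrite !mxE; case: ifP => _.
      by rewrite addr0 subrK.
    by rewrite add0r subrK.
- move=> u v w u' v' w' [Au1 Au2] [Bv1 Bv2] [Cw1 Cw2] [Au1' Au2'] [Bv1' Bv2'] [Cw1' Cw2'] E.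
  have Ei : forall i, u 0 i + v 0 i + w 0 i = u' 0 i + v' 0 i + w' 0 i.
    by move=> i; move/rowP: E => /(_ i); rewrite !mxE.
  have wP : forall i, i \in P -> w 0 i - w' 0 i = 0.
    apply: (@const_zero _ _ P (fun i => u 0 i - u' 0 i) _ i0 iP).
    - by rewrite sumrB Au2 Au2' subrr.
    - by move=> i Hi; rewrite (Cw1 i i0 Hi iP) (Cw1' i i0 Hi iP).
    - move=> i Hi; have := Ei i; rewrite (Bv1 i Hi) (Bv1' i Hi); lra.
  have wN : forall i, i \in ~: P -> w 0 i - w' 0 i = 0.
    apply: (@const_zero _ _ (~: P) (fun i => v 0 i - v' 0 i) _ j0 jP).
    - by rewrite sumrB Bv2 Bv2' subrr.
    - by move=> i Hi; rewrite (Cw2 i j0 Hi jP) (Cw2' i j0 Hi jP).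
    - move=> i Hi; have := Ei i; rewrite (Au1 i Hi) (Au1' i Hi); lra.
  have wE : w = w'.
    apply/rowP => i; case: (boolP (i \in P)) => Hi.
      by have := wP i Hi; lra.
    have Hi' : i \in ~: P by rewrite inC.
    by have := wN i Hi'; lra.
  have uE : u = u'.
    apply/rowP => i; case: (boolP (i \in P)) => Hi.
      by have := Ei i; rewrite wE (Bv1 i Hi) (Bv1' i Hi); lra.
    have Hi' : i \in ~: P by rewrite inC.
    by rewrite (Au1 i Hi') (Au1' i Hi').
  split => //.
  by move: E; rewrite uE wE => /addIr/addrI.
- move=> z [Z1 Z2].
  have KS : forall i, \sum_j Kstar beta lp s i j * z 0 j = 0.
    move=> i; rewrite (bigID (mem P)) /=.
    rewrite [X in X + _](eq_bigr (fun j => Kstar beta lp s i i0 * z 0 j)); last first.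
      by move=> j Hj; rewrite /Kstar Hj iP.
    rewrite -mulr_sumr Z2 mulr0 add0r big1 // => j Hj.
    by rewrite Z1 ?mulr0 // inE.
  have gE : forall i, i \in P -> gammaA beta lp s i = gammaA beta lp s i0.
    by move=> i Hi; apply: (@gclass _ _ s hs); rewrite Hi iP.
  split; first by move=> i Hi; rewrite mxE KS mulr0 addr0 Z1 // mulr0.
  rewrite (eq_bigr (fun i => - gammaA beta lp s i0 * z 0 i)); last first.
    by move=> i Hi; rewrite mxE KS mulr0 addr0 gE.
  by rewrite -mulr_sumr Z2 mulr0.
- move=> z [Z1 Z2].
  have KS : forall i, \sum_j Kstar beta lp s i j * z 0 j = 0.
    move=> i; rewrite (bigID (mem P)) /=.
    rewrite big1 ?add0r; last by move=> j Hj; rewrite Z1 ?mulr0.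
    rewrite (eq_bigr (fun j => Kstar beta lp s i j0 * z 0 j)); last first.
      by move=> j Hj; rewrite /Kstar (negbTE Hj) (negbTE jP').
    rewrite -mulr_sumr.
    suff -> : \sum_(i0 | i0 \notin P) z 0 i0 = \sum_(i0 in ~: P) z 0 i0 by rewrite Z2 mulr0.
    by apply: eq_bigl => j; rewrite inC.
  have gE : forall i, i \in ~: P -> gammaA beta lp s i = gammaA beta lp s j0.
    by move=> i Hi; apply: (@gclass _ _ s hs); rewrite inC in Hi; rewrite (negbTE Hi) (negbTE jP').
  split; first by move=> i Hi; rewrite mxE KS mulr0 addr0 Z1 // mulr0.
  rewrite (eq_bigr (fun i => - gammaA beta lp s j0 * z 0 i)); last first.
    by move=> i Hi; rewrite mxE KS mulr0 addr0 gE.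
  by rewrite -mulr_sumr Z2 mulr0.
- move=> z [Z1 Z2]; split => i j Hi Hj; apply: LkE.
  + by rewrite Hi Hj.
  + exact: Z1.
  + by move: Hi Hj; rewrite !inC => Hi Hj; rewrite (negbTE Hi) (negbTE Hj).
  + exact: Z2.
Qed.
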